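(* Let $p$ be a prime, $r\ge1$, $q=p^r$, and $G=(\mathbb{Z}/q\mathbb{Z})^*$. Let $h:G\to\mathbb{R}$ be an even function (i.e. $h(-b)=h(b)$ for all $b\in G$) that is monotonic on $[1,q/2]_\mathbb{Z}=\{i\in\mathbb{Z}:1\le i\le q/2,\ \gcd(i,p)=1\}$ (viewed as a subset of $G$ via reduction mod $q$). If there is $a\in G$ with $a\neq\pm1$ such that $h(ab)=h(b)$ for all $b\in G$, then $h$ is constant. *)

(* Defs.v *)
From HB Require Import structures.
From mathcomp Require Import all_boot all_order all_algebra.
From mathcomp Require Import reals.

Import Order.TTheory GRing.Theory Num.Theory.
Local Open Scope ring_scope.

Definition half_range (p q : nat) (i : nat) : bool :=
  [&& (1 <= i)%N, (i.*2 <= q)%N & coprime i p].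

Definition monotone_on_half {R : realType} (p q : nat) (h : 'Z_q -> R) : Prop :=
  (forall i j : nat, half_range p q i -> half_range p q j -> (i <= j)%N ->
      h (i%:R) <= h (j%:R))
  \/
  (forall i j : nat, half_range p q i -> half_range p q j -> (i <= j)%N ->
      h (j%:R) <= h (i%:R)).

(* Main.v *)
Require Import Defs.
From HB Require Import structures.
From mathcomp Require Import all_boot all_order all_algebra.
From mathcomp Require Import reals.
From mathcomp Require Import zify.
Import Order.TTheory GRing.Theory Num.Theory.

Definition rp (q n : nat) := minn (n %% q) (q - n %% q).

Lemma rp_small q n : (0 < q)%N -> (n * 2 <= q)%N -> rp q n = n.
Proof.
move=> q0 h; rewrite /rp modn_small; last by lia.
apply/minn_idPl; lia.
Qed.

Lemma rp_le q n : (0 < q)%N -> (rp q n * 2 <= q)%N.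
Proof. move=> q0; rewrite /rp; have := ltn_pmod n q0; lia. Qed.

Lemma rp_cong q m n : m %% q = n %% q -> rp q m = rp q n.
Proof. by rewrite /rp => ->. Qed.

Lemma rp_neg q m n : (0 < q)%N -> (m + n) %% q = 0 -> rp q m = rp q n.
Proof.
move=> q0 h; rewrite /rp.
have hm := ltn_pmod m q0; have hn := ltn_pmod n q0.
move: h; rewrite -modnDm => /eqP; rewrite -/(dvdn q _) => /dvdnP [M hM].
have [e|[e|M2]] : (M = 0 \/ M = 1 \/ 2 <= M)%N by lia.
- move: hM; rewrite e mul0n => hM.
  have -> : m %% q = 0 by lia.
  have -> : n %% q = 0 by lia.
  done.
- move: hM; rewrite e mul1n => hM.
  have -> : n %% q = q - m %% q by lia.
  rewrite (_ : q - (q - m %% q) = m %% q); first by rewrite minnC.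
  lia.
- have : (2 * q <= M * q)%N by rewrite leq_mul2r M2 orbT.
  lia.
Qed.

Lemma dvd_mod p q n : (p %| q)%N -> (p %| n %% q)%N = (p %| n)%N.
Proof. by move=> pq; rewrite /dvdn modn_dvdm. Qed.

Lemma halfE p q i : prime p ->
  half_range p q i = [&& (0 < i)%N, (i * 2 <= q)%N & ~~ (p %| i)%N].
Proof.
move=> pp; rewrite /half_range coprime_sym prime_coprime // -muln2.
done.
Qed.

Lemma half_rp p q n : prime p -> (1 < q)%N -> (p %| q)%N -> ~~ (p %| n)%N ->
  half_range p q (rp q n).
Proof.
move=> pp q1 pq pn; rewrite halfE //.
have q0 : (0 < q)%N by lia.
have hle := @rp_le q n q0.
suff : (0 < rp q n)%N && ~~ (p %| rp q n)%N by case/andP=> -> ->; rewrite hle.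
have pm : ~~ (p %| n %% q)%N by rewrite dvd_mod.
have mq := ltn_pmod n q0.
have m0 : (0 < n %% q)%N.
  rewrite lt0n; apply: contra pm => /eqP ->; exact: dvdn0.
rewrite /rp; case: (leqP (n %% q) (q - n %% q)) => hh.
- by rewrite m0.
- apply/andP; split; first by lia.
  by rewrite dvdn_subr ?(ltnW mq).
Qed.

Lemma half1 p q : prime p -> (1 < q)%N -> half_range p q 1.
Proof.
move=> pp q1; rewrite halfE //= mul1n q1 /= dvdn1.
have := prime_gt1 pp; lia.
Qed.

Lemma sside p q d j : prime p -> (1 < q)%N -> half_range p q d -> (2 <= d)%N ->
  (1 <= j)%N -> (j * 2 <= q)%N ->
  (forall x, half_range p q x -> (x <= j)%N -> (rp q (d * x) <= j)%N) ->
  (d <= j)%N /\ (q <= 2 * j + 2 * d)%N.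
Proof.
move=> pp q1 hd d2 j1 jq st.
have q0 : (0 < q)%N by lia.
have p1 := prime_gt1 pp.
move: (hd); rewrite halfE // => /and3P [d0 dq pd].
have dj : (d <= j)%N.
  by have := st 1 (@half1 p q pp q1) j1; rewrite muln1 rp_small.
split=> //.
pose P x := ~~ (p %| x)%N && (j < d * x)%N.
have exP : exists x, P x /\ (x <= j)%N.
  case pj: (p %| j)%N.
  - exists j.-1; rewrite /P.
    have pj1 : ~~ (p %| j.-1)%N.
      apply/negP => h.
      have : (p %| j - j.-1)%N by rewrite dvdn_sub.
      rewrite (_ : j - j.-1 = 1)%N; last by lia.
      by rewrite dvdn1; lia.
    rewrite pj1 /=; split; last by lia.
    have j2 : (2 < j)%N.
      have : j != 2%N.
        apply/eqP=> e; move: pj; rewrite e => p2.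
        have p2' : p = 2%N.
          by move: p2; rewrite dvdn_prime2 // => /eqP.
        move: pd; rewrite p2' dvdn2 /=.
        have -> : d = 2%N by lia.
        done.
      lia.
    have : (2 * j.-1 <= d * j.-1)%N by rewrite leq_mul2r d2 orbT.
    lia.
  - exists j; rewrite /P pj /=; split=> //.
    have : (2 * j <= d * j)%N by rewrite leq_mul2r d2 orbT.
    lia.
have exP' : exists x, P x by case: exP => x [] ? _; exists x.
case: (ex_minnP exP') => x0 /andP [px0 jx0] min0.
have x0j : (x0 <= j)%N by case: exP => x [] Px xj; exact: leq_trans (min0 x Px) xj.
have x0_2 : (2 <= x0)%N.
  case: x0 jx0 {px0 min0 x0j} => [|[|x]]; rewrite ?muln0 ?muln1 //; lia.
have pred_ok : (d * x0 <= j + 2 * d)%N.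
  case py: (p %| x0.-1)%N.
  - have py2 : ~~ (p %| x0.-2)%N.
      apply/negP => h.
      have : (p %| x0.-1 - x0.-2)%N by rewrite dvdn_sub.
      rewrite (_ : x0.-1 - x0.-2 = 1)%N; last by lia.
      by rewrite dvdn1; lia.
    have x03 : (3 <= x0)%N.
      case: x0 {px0 jx0 min0 x0j} x0_2 py py2 => [|[|[|x]]] //= _.
      by rewrite dvdn1; lia.
    case: (leqP (d * x0.-2) j) => h.
    + have : (d * x0 = d * x0.-2 + 2 * d)%N.
        rewrite (_ : x0 = x0.-2 + 2)%N; last by lia.
        rewrite mulnDr; lia.
      lia.
    + have := min0 x0.-2; rewrite /P py2 h => /(_ isT); lia.
  - case: (leqP (d * x0.-1) j) => h.
    + have : (d * x0 = d * x0.-1 + d)%N.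
        rewrite (_ : x0 = x0.-1 + 1)%N; last by lia.
        rewrite mulnDr; lia.
      lia.
    + have := min0 x0.-1; rewrite /P py h => /(_ isT); lia.
have hx0 : half_range p q x0 by rewrite halfE // px0 /= andbT; lia.
have := st x0 hx0 x0j.
case: (ltnP (d * x0) q) => dq0; last by lia.
rewrite /rp modn_small //.
case: (leqP (d * x0) (q - d * x0)); lia.
Qed.

Lemma rp_mul q c n : (0 < q)%N -> rp q (c * rp q n) = rp q (c * n).
Proof.
move=> q0; have mq := ltn_pmod n q0.
rewrite {2}/rp; case: (leqP (n %% q) (q - n %% q)) => _.
- by apply: rp_cong; rewrite modnMmr.
- apply: rp_neg => //.
  rewrite -modnDmr -modnMmr modnDmr.
  rewrite -mulnDr (_ : q - n %% q + n %% q = q)%N; last by lia.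
  by rewrite modnMl.
Qed.

Lemma halving p q d k : prime p -> (1 < q)%N -> odd q -> half_range p q d ->
  (k * 2 <= q)%N -> (3 * k < q)%N -> ~~ (p %| 2)%N ->
  (forall x, half_range p q x -> (x <= k)%N -> (rp q (d * x) <= k)%N) ->
  (forall x, half_range p q x -> (x <= k./2)%N -> (rp q (d * x) <= k./2)%N).
Proof.
move=> pp q1 oq hd kq k3 p2 st x hx xk.
have q0 : (0 < q)%N by lia.
move: (hx); rewrite halfE // => /and3P [x0 xq px].
have h2x : half_range p q (2 * x).
  rewrite halfE //; apply/and3P; split; [lia | lia |].
  by rewrite Euclid_dvdM // negb_or p2.
have xk2 : (x <= k)%N by lia.
have t1 := st x hx xk2.
set t := rp q (d * x) in t1 *.
have x2k : (2 * x <= k)%N by lia.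
have := st _ h2x x2k.
rewrite mulnCA -(@rp_mul q 2 (d * x) q0) -/t.
have tq : (t * 2 <= q)%N by apply: rp_le.
case: (leqP (t * 2 * 2) q) => tt.
- rewrite rp_small; [lia | lia | lia].
- have t2q : (2 * t < q)%N.
    have : (2 * t != q)%N.
      apply/eqP => e; move: oq; rewrite -e oddM /=; done.
    lia.
  rewrite /rp modn_small //.
  case: (leqP (2 * t) (q - 2 * t)); lia.
Qed.

Lemma zs p q d k t : prime p -> (1 < q)%N -> odd q -> (p %| q)%N ->
  (2 * t + 1 + 2 * k < q)%N -> ~~ (p %| 2 * t + 1)%N ->
  (forall x, half_range p q x -> (k < x)%N -> (k < rp q (d * x))%N) ->
  exists y M, [/\ (k < y)%N, (y + k < q)%N & (d * (2 * t + 1) + 2 * y = M * q)%N].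
Proof.
move=> pp q1 oq pq tk pt st.
have q0 : (0 < q)%N by lia.
have qe := odd_double_half q; rewrite oq in qe.
set z := (q./2 - t)%N.
have ez : (2 * z + (2 * t + 1) = q)%N by rewrite /z; lia.
have hz : half_range p q z.
  rewrite halfE //; apply/and3P; split; [lia|lia|].
  apply/negP => pz.
  have : (p %| 2 * z + (2 * t + 1))%N by rewrite ez.
  by rewrite dvdn_addr ?(negbTE pt) // dvdn_mull.
have := st z hz ltac:(lia).
set y := ((d * z) %% q)%N.
have yq : (y < q)%N by apply: ltn_pmod.
rewrite /rp -/y => hy.
have hdiv : (q %| d * (2 * t + 1) + 2 * y)%N.
  rewrite /dvdn /y -modnDmr modnMmr modnDmr.
  rewrite (_ : d * (2 * t + 1) + 2 * (d * z) = d * q)%N; last first.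
    by rewrite -ez; lia.
  by rewrite modnMl.
case/dvdnP: hdiv => M hM.
exists y, M; split=> //; lia.
Qed.

Lemma par n : exists e, (n = 2 * e \/ n = 2 * e + 1)%N.
Proof.
exists n./2; have := odd_double_half n; case: (odd n) => /=; rewrite -muln2; lia.
Qed.


Lemma gen_arith X y M q k f Q : (k < y)%N -> (y + k < q)%N -> (X + 2 * y = M * q)%N ->
  X = (2 * f + 1)%N -> q = (2 * Q + 1)%N -> (X + 2 * k < q)%N \/ (q + 2 * k < X)%N.
Proof.
move=> ky yk hM hX hq.
have [eM|[eM|[eM|M3]]] : (M = 0 \/ M = 1 \/ M = 2 \/ 3 <= M)%N by lia.
- move: hM; rewrite eM; lia.
- move: hM; rewrite eM; lia.
- move: hM; rewrite eM; lia.
- have : (3 * q <= M * q)%N by rewrite leq_mul2r M3 orbT.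
  lia.
Qed.

Lemma one_arith d y M q k : (k < y)%N -> (y + k < q)%N -> (d + 2 * y = M * q)%N ->
  (d <= k)%N -> (0 < d)%N -> (d + 2 * y = q)%N.
Proof.
move=> ky yk hM dk d0.
have [eM|[eM|M2]] : (M = 0 \/ M = 1 \/ 2 <= M)%N by lia.
- move: hM; rewrite eM; lia.
- move: hM; rewrite eM; lia.
- have : (2 * q <= M * q)%N by rewrite leq_mul2r M2 orbT.
  lia.
Qed.

Lemma odd_big p q d k : prime p -> (1 < q)%N -> odd q -> (p %| q)%N ->
  half_range p q d -> (2 <= d)%N -> half_range p q k ->
  (q <= 3 * k)%N -> (2 * k + 3 <= q)%N ->
  (forall x, half_range p q x -> (x <= k)%N -> (rp q (d * x) <= k)%N) ->
  (forall x, half_range p q x -> (k < x)%N -> (k < rp q (d * x))%N) -> False.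
Proof.
move=> pp q1 oq pq hd d2 hk q3k kq fw bw.
have q0 : (0 < q)%N by lia.
have [Q qe] : exists Q, q = (2 * Q + 1)%N.
  have [Q [h|h]] := par q; last by exists Q.
  by move: oq; rewrite h oddM.
move: (hk); rewrite halfE // => /and3P [k0 kq2 pk].
move: (hd); rewrite halfE // => /and3P [_ dq pd].
have [dk qdk] := sside p q d k pp q1 hd d2 k0 kq2 fw.
have p1 : ~~ (p %| 2 * 0 + 1)%N by rewrite dvdn1; have := prime_gt1 pp; lia.
have [y [M [ky yk hM]]] := zs p q d k 0 pp q1 oq pq ltac:(lia) p1 bw.
move: hM; rewrite muln0 add0n muln1 => hM.
have hd1 := one_arith d y M q k ky yk hM dk ltac:(lia).
have [e de] : exists e, d = (2 * e + 1)%N.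
  have [e [h|h]] := par d; last by exists e.
  lia.
have dW : (d + 2 * k < q)%N by lia.
have gen : forall t, (2 * t + 1 + 2 * k < q)%N -> ~~ (p %| 2 * t + 1)%N ->
    (d * (2 * t + 1) + 2 * k < q)%N \/ (q + 2 * k < d * (2 * t + 1))%N.
  move=> t tk pt.
  have [y' [M' [ky' yk' hM']]] := zs p q d k t pp q1 oq pq tk pt bw.
  apply: (gen_arith _ y' M' q k (e * (2 * t + 1) + t) Q) => //.
  rewrite de; lia.
case: (boolP (p == 3%N)) => [/eqP p3 | p3].
- have [W5|W7] : (2 * k + 5 = q \/ 2 * k + 7 <= q)%N by lia.
  + have d3 : d = 3%N by clear -W5 hd1 ky qdk de; lia.
    by move: pd; rewrite d3 p3 dvdnn.
  + have := gen 2 ltac:(clear -W7; lia) ltac:(by rewrite p3).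
    clear -W7 qdk dW q3k; lia.
- have [W3|W5] : (2 * k + 3 = q \/ 2 * k + 5 <= q)%N by lia.
  + clear -W3 hd1 ky qdk de; lia.
  + have p3' : ~~ (p %| 2 * 1 + 1)%N.
      apply/negP => h; move: h; rewrite dvdn_prime2 //.
      by move/eqP => e3; rewrite e3 eqxx in p3.
    have := gen 1 ltac:(clear -W5; lia) p3'.
    clear -W5 qdk dW q3k; lia.
Qed.

Lemma even_case q Q d k i : q = (4 * Q)%N ->
  half_range 2 q d -> (2 <= d)%N -> half_range 2 q k -> half_range 2 q i -> (k < i)%N ->
  (forall x, half_range 2 q x -> (x <= k)%N -> (rp q (d * x) <= k)%N) ->
  (forall x, half_range 2 q x -> (k < x)%N -> (k < rp q (d * x))%N) -> False.
Proof.
move=> qe hd d2 hk hi ki fw bw.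
have pp : prime 2 by [].
move: (hk); rewrite halfE // => /and3P [k0 kq2 pk].
move: (hd); rewrite halfE // => /and3P [_ dq pd].
move: (hi); rewrite halfE // => /and3P [_ iq pi].
have q1 : (1 < q)%N by clear -qe dq d2; lia.
have [dk qdk] := sside 2 q d k pp q1 hd d2 k0 kq2 fw.
have [e de] : exists e, d = (2 * e + 1)%N.
  have [e [h|h]] := par d; last by exists e.
  by move: pd; rewrite h dvdn_mulr.
have [f fi] : exists f, i = (2 * f + 1)%N.
  have [f [h|h]] := par i; last by exists f.
  by move: pi; rewrite h dvdn_mulr.
set N := (2 * Q - 1)%N.
have hN : half_range 2 q N.
  rewrite halfE //; apply/and3P; split; [clear -qe dq d2 de; lia | clear -qe; lia|].
  have -> : N = (2 * (Q - 1) + 1)%N by rewrite /N; clear -qe dq d2 de; lia.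
  by rewrite dvdn_addr ?dvdn_mulr.
have kN : (k < N)%N by rewrite /N; clear -qe iq fi ki; lia.
have := bw N hN kN.
have eqm : (d * N = e * q + (2 * Q - d))%N.
  rewrite /N qe de; clear -qe dq de; nia.
rewrite /rp eqm modnMDl modn_small; last by clear -qe dq d2 de; lia.
have -> : minn (2 * Q - d) (q - (2 * Q - d)) = (2 * Q - d)%N.
  apply/minn_idPl; clear -qe dq d2 de; lia.
clear -qe qdk dq d2; lia.
Qed.

Lemma arith p r d k i : prime p -> (0 < r)%N ->
  half_range p (p ^ r) d -> (2 <= d)%N -> half_range p (p ^ r) k ->
  half_range p (p ^ r) i -> (k < i)%N ->
  (forall x, half_range p (p ^ r) x -> (x <= k)%N -> (rp (p ^ r) (d * x) <= k)%N) ->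
  (forall x, half_range p (p ^ r) x -> (k < x)%N -> (k < rp (p ^ r) (d * x))%N) -> False.
Proof.
move=> pp r0 hd d2 hk hi ki fw bw.
set q := (p ^ r)%N in hd hk hi fw bw.
have p1 := prime_gt1 pp.
have q1 : (1 < q)%N.
  rewrite /q -(subnKC r0) add1n expnS.
  have : (0 < p ^ (r - 1))%N by rewrite expn_gt0 (ltnW p1).
  clear -p1; nia.
have pq : (p %| q)%N by rewrite /q dvdn_exp.
move: (hk); rewrite halfE // => /and3P [k0 kq2 pk].
move: (hd); rewrite halfE // => /and3P [_ dq pd].
move: (hi); rewrite halfE // => /and3P [_ iq pi].
have [dk qdk] := sside p q d k pp q1 hd d2 k0 kq2 fw.
case: (even_prime pp) => [p2 | op].
- have [e de] : exists e, d = (2 * e + 1)%N.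
    have [e [h|h]] := par d; last by exists e.
    by move: pd; rewrite h p2 dvdn_mulr.
  have r3 : (3 <= r)%N.
    rewrite leqNgt; apply/negP => hr.
    have : (q <= 4)%N.
      by rewrite /q p2 (_ : 4 = 2 ^ 2)%N // leq_pexp2l //; clear -hr; lia.
    clear -dq de d2; lia.
  have qe : q = (4 * 2 ^ (r - 2))%N.
    by rewrite /q p2 -[in LHS](subnKC (ltnW r3)) expnD.
  move: hd hk hi fw bw; rewrite p2 => hd hk hi fw bw.
  exact: (even_case q (2 ^ (r - 2)) d k i qe hd d2 hk hi ki fw bw).
- have oq : odd q by rewrite /q oddX op orbT.
  have [Q qe] : exists Q, q = (2 * Q + 1)%N.
    have [Q [h|h]] := par q; last by exists Q.
    by move: oq; rewrite h oddM.
  have p2 : ~~ (p %| 2)%N.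
    by rewrite dvdn_prime2 //; apply/negP => /eqP e; move: op; rewrite e.
  case: (ltnP (3 * k) q) => k3.
  + have fw2 := halving p q d k pp q1 oq hd kq2 k3 p2 fw.
    have [] := sside p q d (k./2) pp q1 hd d2 ltac:(clear -dk d2; lia)
      ltac:(clear -kq2; lia) fw2.
    clear -k3 dk; lia.
  + apply: (odd_big p q d k pp q1 oq pq hd d2 hk k3 _ fw bw).
    clear -qe iq ki; lia.
Qed.

Lemma core (R : realDomainType) (g : nat -> R) p r d : prime p -> (0 < r)%N ->
  half_range p (p ^ r) d -> (2 <= d)%N ->
  (forall i j, half_range p (p ^ r) i -> half_range p (p ^ r) j -> (i <= j)%N -> (g i <= g j)%R) ->
  (forall x, half_range p (p ^ r) x -> g (rp (p ^ r) (d * x)) = g x) ->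
  forall i, half_range p (p ^ r) i -> g i = g 1%N.
Proof.
move=> pp r0 hd d2 mono inv i hi.
set q := (p ^ r)%N in hd mono inv hi *.
have p1 := prime_gt1 pp.
have q1 : (1 < q)%N.
  rewrite /q -(subnKC r0) add1n expnS.
  have : (0 < p ^ (r - 1))%N by rewrite expn_gt0 (ltnW p1).
  clear -p1; nia.
have pq : (p %| q)%N by rewrite /q dvdn_exp.
have h1 := half1 p q pp q1.
apply/eqP; apply/negPn/negP => ne.
pose P x := half_range p q x && (g x == g 1%N).
have exP : exists x, P x by exists 1%N; rewrite /P h1 eqxx.
have bnd : forall x, P x -> (x <= q)%N.
  move=> x /andP [hx _]; move: hx; rewrite halfE // => /and3P [_ hx2 _]; clear -hx2; lia.
case: (ex_maxnP exP bnd) => k /andP [hk gk] maxk.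
have chr : forall x, half_range p q x -> (x <= k)%N = (g x == g 1%N).
  move=> x hx; apply/idP/idP => [xk|gx].
  - move: (hx); rewrite halfE // => /and3P [x0 _ _].
    have a1 := mono 1%N x h1 hx x0.
    have a2 := mono x k hx hk xk.
    rewrite (eqP gk) in a2.
    by rewrite eq_le a1 a2.
  - by apply: maxk; rewrite /P hx gx.
have hrp : forall x, half_range p q x -> half_range p q (rp q (d * x)).
  move=> x hx; apply: half_rp => //.
  move: hx hd; rewrite !halfE // => /and3P [_ _ px] /and3P [_ _ pd].
  by rewrite Euclid_dvdM // negb_or pd px.
have fw : forall x, half_range p q x -> (x <= k)%N -> (rp q (d * x) <= k)%N.
  by move=> x hx xk; rewrite chr ?hrp // inv // -chr.
have bw : forall x, half_range p q x -> (k < x)%N -> (k < rp q (d * x))%N.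
  move=> x hx kx; rewrite ltnNge chr ?hrp // inv // -chr //.
  by rewrite -ltnNge.
have ki : (k < i)%N by rewrite ltnNge chr // ne.
exact: (arith p r d k i pp r0 hd d2 hk hi ki fw bw).
Qed.

Local Open Scope ring_scope.
Lemma rp_cases q (b : 'Z_q) : (1 < q)%N ->
  ((rp q (val b))%:R = b) \/ ((rp q (val b))%:R = - b).
Proof.
move=> q1.
have bq : (val b < q)%N by rewrite -[X in (_ < X)%N](Zp_cast q1); exact: ltn_ord.
rewrite /rp modn_small //.
case: (leqP (val b) (q - val b)) => _.
- by left; rewrite natr_Zp.
- right; rewrite natrB ?(ltnW bq) // pchar_Zp // natr_Zp sub0r //.
Qed.

Lemma unitE q (b : 'Z_q) : (1 < q)%N -> (b \is a GRing.unit) = coprime q (val b).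
Proof. by move=> q1; rewrite -{1}(natr_Zp b) unitZpE. Qed.

Theorem lemma4p1 (R : realType) (p r : nat) (hp : prime p) (hr : (1 <= r)%N)
  (h : 'Z_(p ^ r)%N -> R)
  (heven : forall b : 'Z_(p ^ r)%N, b \is a GRing.unit -> h (- b) = h b)
  (hmono : monotone_on_half p (p ^ r)%N h)
  (a : 'Z_(p ^ r)%N) (ha : a \is a GRing.unit) (ha1 : a != 1) (ha2 : a != -1)
  (hinv : forall b : 'Z_(p ^ r)%N, b \is a GRing.unit -> h (a * b) = h b) :
  forall b c : 'Z_(p ^ r)%N, b \is a GRing.unit -> c \is a GRing.unit -> h b = h c.
Proof.
have p1 := prime_gt1 hp.
have q1 : (1 < p ^ r)%N.
  rewrite -(subnKC hr) add1n expnS.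
  have : (0 < p ^ (r - 1))%N by rewrite expn_gt0 (ltnW p1).
  clear -p1; nia.
have pq : (p %| p ^ r)%N by rewrite dvdn_exp.
pose g (i : nat) := h (i%:R).
have cop : forall n, coprime (p ^ r) n = ~~ (p %| n)%N.
  by move=> n; rewrite coprime_pexpl // prime_coprime.
have F : forall b : 'Z_(p ^ r), b \is a GRing.unit -> g (rp (p ^ r) (val b)) = h b.
  move=> b ub; rewrite /g; case: (rp_cases _ b q1) => ->; first done.
  exact: heven.
have Hb : forall b : 'Z_(p ^ r), b \is a GRing.unit -> half_range p (p ^ r) (rp (p ^ r) (val b)).
  by move=> b ub; apply: half_rp => //; rewrite -cop -unitE.
set d := rp (p ^ r) (val a).
have hd : half_range p (p ^ r) d by exact: Hb.
have d2 : (2 <= d)%N.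
  move: (hd); rewrite halfE // => /and3P [d0 _ _].
  rewrite ltn_neqAle d0 andbT; apply/eqP => d1.
  case: (rp_cases _ a q1); rewrite -/d -d1 => e.
  - by move/eqP: ha1; apply.
  - by move/eqP: ha2; apply; rewrite -[a]opprK -e.
have unat : forall x, half_range p (p ^ r) x -> (x%:R : 'Z_(p ^ r)) \is a GRing.unit.
  move=> x; rewrite halfE // unitZpE // cop => /and3P [_ _ ->] //.
have inv : forall x, half_range p (p ^ r) x -> g (rp (p ^ r) (d * x)) = g x.
  move=> x hx.
  have ux := unat x hx.
  have ud : ((d * x)%N%:R : 'Z_(p ^ r)) \is a GRing.unit.
    rewrite natrM unitrM ux andbT; exact: unat.
  rewrite -(rp_cong _ _ _ (modn_mod (d * x) (p ^ r))) -(val_Zp_nat q1) F //.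
  rewrite natrM; case: (rp_cases _ a q1); rewrite -/d => ->.
  - by rewrite hinv.
  - by rewrite mulNr heven ?hinv // unitrM ha ux.
have key : forall i, half_range p (p ^ r) i -> g i = g 1%N.
  case: hmono => mono.
  - exact: (core R g p r d hp hr hd d2 mono inv).
  - move=> i hi.
    have := core R (fun i => - g i) p r d hp hr hd d2 _ _ i hi.
    rewrite /= => e; apply: oppr_inj; apply: e.
    + by move=> i0 j0 hi0 hj0 ij; rewrite lerN2; apply: mono.
    + by move=> x hx; rewrite inv.
move=> b c ub uc.
by rewrite -(F b ub) -(F c uc) key ?Hb // key ?Hb.
Qed.
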